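(* Assume the general-case standing hypotheses, let $\sigma\in(0,1)$, $\mu^+=\sigma\mu$. For $(x,\lambda)\in\mathcal B((x^*,\lambda^* ),\delta)$ with $l<x<u$, $\lambda^l,\lambda^u>0$, let $(\Delta x^N,\Delta\lambda^{l,N},\Delta\lambda^{u,N})$ be the Newton direction, let $d_i=[\nabla^2f(x)]_{ii}+\frac{\lambda_i^l}{x_i-l_i}+\frac{\lambda^u_i}{u_i-x_i}$ and for $i$ with $d_i\neq0$ define $$\Delta x_i^S=-\frac{1}{d_i}\Big([\nabla f(x)]_i-\mu^+\Big[\frac1{x_i-l_i}-\frac1{u_i-x_i}\Big]\Big).$$ Then $\Delta x_i^S-\Delta x_i^N=\frac1{d_i}\sum_{j\ne i}[\nabla^2f(x)]_{ij}\Delta x_j^N$ for each such $i$. Moreover, for every $C_1>0$ there exist $\rho>0$, $\bar\mu\in(0,\hat\mu]$ and constants $0<c\le C$ such that for all $\mu\in(0,\bar\mu]$ and all such $(x,\lambda)$ with $\|(x,\lambda)-(x^\mu,\lambda^\mu)\|<\rho$ and $\|F_\mu(x,\lambda)\|\le C_1\mu$: $0<1/d_i\le C\mu$ for $i\in\mathcal A_x$, $c\le 1/d_i\le C$ for $i\in\mathcal I_x$, and $|\Delta x_i^S-\Delta x_i^N|\le C\mu^2$ for $i\in\mathcal A_x$.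
   Context: General problem: minimize $f(x)$ subject to $l\le x\le u$, $l,u\in\mathbb R^n$, $l<u$, $f$ twice continuously differentiable with locally Lipschitz Hessian; multipliers $\lambda=(\lambda^l,\lambda^u)$. $X=\mathrm{diag}(x)$, $L=\mathrm{diag}(l)$, $U=\mathrm{diag}(u)$, $\Lambda^l=\mathrm{diag}(\lambda^l)$, $\Lambda^u=\mathrm{diag}(\lambda^u)$, $e$ all-ones, Euclidean norms. $F_\mu(x,\lambda)=\begin{bmatrix}\nabla f(x)-\lambda^l+\lambda^u\\ \Lambda^l(X-L)e-\mu e\\ \Lambda^u(U-X)e-\mu e\end{bmatrix}$, $F'(x,\lambda)=\begin{bmatrix}\nabla^2f(x)&-I&I\\ \Lambda^l&X-L&0\\ -\Lambda^u&0&U-X\end{bmatrix}$. Newton direction: solution of $F'(x,\lambda)(\Delta x^N,\Delta\lambda^{l,N},\Delta\lambda^{u,N})=-F_{\mu^+}(x,\lambda)$. Sets: $\mathcal A_l=\{i:x^*_i=l_i\}$, $\mathcal A_u=\{i:x^*_i=u_i\}$, $\mathcal I_l,\mathcal I_u$ their complements, $\mathcal A_x=\mathcal A_l\cup\mathcal A_u$, $\mathcal I_x$ its complement. Standing hypotheses: $\nabla f(x^* )-\lambda^{l*}+\lambda^{u*}=0$, $l\le x^*\le u$, $\lambda^{l*},\lambda^{u*}\ge0$, $(x^*-l)_i\lambda^{l*}_i=0$, $(u-x^* )_i\lambda^{u*}_i=0$, $(x^*-l)+\lambda^{l*}>0$, $(u-x^* )+\lambda^{u*}>0$, $[\nabla^2f(x^*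 )]_{\mathcal I_x\mathcal I_x}\succ0$; $\delta>0$ with $F'$ nonsingular and boundedly invertible on $\mathcal B((x^*,\lambda^* ),\delta)$; $\hat\mu>0$ with a Lipschitz barrier trajectory $(x^\mu,\lambda^\mu)\in\mathcal B((x^*,\lambda^* ),\delta)$, $F_\mu(x^\mu,\lambda^\mu)=0$, $\|(x^\mu,\lambda^\mu)-(x^*,\lambda^* )\|\le C_4\mu$ for $\mu\in(0,\hat\mu]$. *)

(* Defs.v *)
From HB Require Import structures.
From mathcomp Require Import all_boot all_order all_algebra.
From mathcomp Require Import all_classical all_reals all_analysis.
Set Implicit Arguments. Unset Strict Implicit. Unset Printing Implicit Defensive.
Import Order.TTheory GRing.Theory Num.Theory.
Import numFieldNormedType.Exports.
Local Open Scope ring_scope.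

Section Defs.
Variables (R : realType) (n : nat).

Definition enorm m (v : 'cV[R]_m) : R := Num.sqrt (\sum_i v i 0 ^+ 2).

(* the primal-dual triple (x, lambda^l, lambda^u) stacked into R^{3n} *)
Definition stack (a b c : 'cV[R]_n) : 'cV[R]_(n + n + n) := col_mx (col_mx a b) c.

(* F_mu(x, lambda), with g the gradient of f *)
Definition Fmu (g : 'cV[R]_n -> 'cV[R]_n) (l u : 'cV[R]_n) (mu : R)
  (x ll lu : 'cV[R]_n) : 'cV[R]_(n + n + n) :=
  stack (g x - ll + lu)
        (\col_i (ll i 0 * (x i 0 - l i 0) - mu))
        (\col_i (lu i 0 * (u i 0 - x i 0) - mu)).

(* F'(x, lambda), with H the Hessian of f *)
Definition Fprime (H : 'cV[R]_n -> 'M[R]_n) (l u : 'cV[R]_n)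
  (x ll lu : 'cV[R]_n) : 'M[R]_(n + n + n) :=
  block_mx
    (block_mx (H x) (- 1%:M) (diag_mx ll^T) (diag_mx (x - l)^T))
    (col_mx 1%:M 0)
    (row_mx (- diag_mx lu^T) 0)
    (diag_mx (u - x)^T).

Definition newton_dir H g (l u : 'cV[R]_n) (mup : R) (x ll lu dx dll dlu : 'cV[R]_n) :=
  Fprime H l u x ll lu *m stack dx dll dlu = - Fmu g l u mup x ll lu.

Definition dcoef (H : 'cV[R]_n -> 'M[R]_n) (l u x ll lu : 'cV[R]_n) (i : 'I_n) : R :=
  H x i i + ll i 0 / (x i 0 - l i 0) + lu i 0 / (u i 0 - x i 0).

Definition dxS H (g : 'cV[R]_n -> 'cV[R]_n) (l u : 'cV[R]_n) (mup : R)
  (x ll lu : 'cV[R]_n) (i : 'I_n) : R :=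
  - (dcoef H l u x ll lu i)^-1 *
    (g x i 0 - mup * ((x i 0 - l i 0)^-1 - (u i 0 - x i 0)^-1)).

Definition strictly_interior (l u x ll lu : 'cV[R]_n) :=
  forall i, [/\ l i 0 < x i 0, x i 0 < u i 0, 0 < ll i 0 & 0 < lu i 0].

End Defs.

(* Main.v *)
Require Import Defs.
From HB Require Import structures.
From mathcomp Require Import all_boot all_order all_algebra.
From mathcomp Require Import all_classical all_reals all_analysis.
From mathcomp Require Import ring lra.
Import Order.TTheory GRing.Theory Num.Theory.
Import numFieldNormedType.Exports.
Local Open Scope ring_scope.


From mathcomp Require Import ring lra.


Lemma mx_entry_le (R : realType) m k (A : 'M[R]_(m,k)) i j : `|A i j| <= `|A|.
Proof.
rewrite [leRHS]/Num.Def.normr /= mx_normrE.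
by apply/bigmax_geP; right; exists (i, j).
Qed.


Lemma enorm_entry (R : realType) m (v : 'cV[R]_m) k : `|v k 0| <= enorm v.
Proof.
rewrite /enorm -sqrtr_sqr ler_sqrt; last by apply: sumr_ge0 => i _; rewrite sqr_ge0.
rewrite (bigD1 k) //= lerDl; apply: sumr_ge0 => i _; exact: sqr_ge0.
Qed.


Lemma enorm_le (R : realType) m (v : 'cV[R]_m) (B : R) : 0 <= B ->
  (forall k, `|v k 0| <= B) -> enorm v <= m%:R * B.
Proof.
move=> B0 hB; rewrite /enorm -(ger0_norm (_ : 0 <= m%:R * B)); last by rewrite mulr_ge0.
rewrite -sqrtr_sqr ler_sqrt; last by rewrite sqr_ge0.
apply: (@le_trans _ _ (\sum_(i < m) B ^+ 2)).
  apply: ler_sum => i _; rewrite -real_normK ?num_real //.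
  by rewrite lerXn2r // ?nnegrE.
rewrite sumr_const card_ord exprMn -[_ *+ m]mulr_natl.
apply: ler_wpM2r; first exact: sqr_ge0.
case: m {v hB} => [|m]; first by rewrite expr0n.
rewrite -natrX ler_nat expnS; apply: leq_pmulr; by rewrite expn_gt0.
Qed.



Lemma sum_kron (R : realType) n (i : 'I_n) (a : R) (F : 'I_n -> R) :
  \sum_j (a *+ (i == j)) * F j = a * F i.
Proof.
rewrite (bigD1 i) //= eqxx mulr1n big1 ?addr0 // => j nji.
by rewrite eq_sym (negbTE nji) mulr0n mul0r.
Qed.

Lemma sum_diag (R : realType) n (d : 'rV[R]_n) (v : 'cV[R]_n) i :
  \sum_j diag_mx d i j * v j 0 = d 0 i * v i 0.
Proof. under eq_bigr => j _ do rewrite mxE. exact: sum_kron. Qed.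
Lemma sum_ndiag (R : realType) n (d : 'rV[R]_n) (v : 'cV[R]_n) i :
  \sum_j (- diag_mx d) i j * v j 0 = - (d 0 i * v i 0).
Proof. under eq_bigr => j _ do rewrite !mxE mulNr. by rewrite sumrN sum_kron. Qed.
Lemma sum_one (R : realType) n (v : 'cV[R]_n) i :
  \sum_j (1%:M : 'M[R]_n) i j * v j 0 = v i 0.
Proof. under eq_bigr => j _ do rewrite !mxE. by rewrite sum_kron mul1r. Qed.
Lemma sum_none (R : realType) n (v : 'cV[R]_n) i :
  \sum_j (- (1%:M : 'M[R]_n)) i j * v j 0 = - v i 0.
Proof. under eq_bigr => j _ do rewrite !mxE mulNr. by rewrite sumrN sum_kron mul1r. Qed.

Lemma newton_eqs (R : realType) n (H : 'cV[R]_n -> 'M[R]_n) g l u mup x ll lu dx dll dlu :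
  newton_dir H g l u mup x ll lu dx dll dlu -> forall i,
 [/\ \sum_j H x i j * dx j 0 - dll i 0 + dlu i 0 = -(g x i 0 - ll i 0 + lu i 0),
     ll i 0 * dx i 0 + (x i 0 - l i 0) * dll i 0 = -(ll i 0 * (x i 0 - l i 0) - mup)
   & - (lu i 0 * dx i 0) + (u i 0 - x i 0) * dlu i 0 = -(lu i 0 * (u i 0 - x i 0) - mup)].
Proof.
rewrite /newton_dir /Fprime /stack /Fmu.
rewrite !mul_block_col mul_col_mx mul_row_col !mul0mx !addr0 !opp_col_mx add_col_mx addr0.
move=> /eq_col_mx [/eq_col_mx [E1 E2] E3] i.
move/matrixP/(_ i 0): E1; move/matrixP/(_ i 0): E2; move/matrixP/(_ i 0): E3.
rewrite !mxE !sum_diag !sum_ndiag sum_one sum_none !mxE => E3 E2 E1.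
split.
- by rewrite -E1.
- by rewrite -E2.
- by rewrite -E3.
Qed.

Lemma part1 (R : realType) n (H : 'cV[R]_n -> 'M[R]_n) g (l u : 'cV[R]_n) mup (x ll lu dx dll dlu : 'cV[R]_n) i :
  x i 0 - l i 0 != 0 -> u i 0 - x i 0 != 0 ->
  newton_dir H g l u mup x ll lu dx dll dlu ->
  dcoef H l u x ll lu i != 0 ->
  dxS H g l u mup x ll lu i - dx i 0
       = (dcoef H l u x ll lu i)^-1 * \sum_(j | j != i) H x i j * dx j 0.
Proof.
move=> a0 b0 /newton_eqs /(_ i) [E1 E2 E3] d0.
have Edll : dll i 0 = (x i 0 - l i 0)^-1 * (-(ll i 0 * (x i 0 - l i 0) - mup) - ll i 0 * dx i 0).
  by rewrite -E2; field.
have Edlu : dlu i 0 = (u i 0 - x i 0)^-1 * (-(lu i 0 * (u i 0 - x i 0) - mup) + lu i 0 * dx i 0).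
  by rewrite -E3; field.
move: E1; rewrite (bigD1 i) //= Edll Edlu => E1.
have ES : \sum_(j | j != i) H x i j * dx j 0 =
   - (g x i 0 - ll i 0 + lu i 0) - H x i i * dx i 0
   + (x i 0 - l i 0)^-1 * (-(ll i 0 * (x i 0 - l i 0) - mup) - ll i 0 * dx i 0)
   - (u i 0 - x i 0)^-1 * (-(lu i 0 * (u i 0 - x i 0) - mup) + lu i 0 * dx i 0).
  by rewrite -E1; ring.
rewrite ES /dxS.
move: d0; rewrite /dcoef => d0.
field.
rewrite a0 b0 /=.
have -> : (H x i i * (x i 0 - l i 0) + ll i 0) * (u i 0 - x i 0) + lu i 0 * (x i 0 - l i 0)
  = (H x i i + ll i 0 / (x i 0 - l i 0) + lu i 0 / (u i 0 - x i 0)) * (x i 0 - l i 0) * (u i 0 - x i 0).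
  by field; rewrite a0 b0.
by rewrite !mulf_neq0.
Qed.



Section S.
Variables (R : realType) (n : nat).
Implicit Types (a b c : 'cV[R]_n).

Lemma stack_x a b c i : stack a b c (lshift n (lshift n i)) 0 = a i 0.
Proof. by rewrite /stack !col_mxEu. Qed.
Lemma stack_l a b c i : stack a b c (lshift n (rshift n i)) 0 = b i 0.
Proof. by rewrite /stack col_mxEu col_mxEd. Qed.
Lemma stack_u a b c i : stack a b c (rshift (n + n) i) 0 = c i 0.
Proof. by rewrite /stack col_mxEd. Qed.

Lemma stack_bound a b c (B : R) :
  (forall i, [/\ `|a i 0| <= B, `|b i 0| <= B & `|c i 0| <= B]) ->
  forall k, `|stack a b c k 0| <= B.
Proof.
move=> hB k; case: (splitP k) => [k1 hk|k2 hk].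
  have -> : k = lshift _ k1 by apply: val_inj.
  case: (splitP k1) => [j hj|j hj].
    have -> : k1 = lshift _ j by apply: val_inj.
    by rewrite stack_x; case: (hB j).
  have -> : k1 = rshift _ j by apply: val_inj.
  by rewrite stack_l; case: (hB j).
have -> : k = rshift _ k2 by apply: val_inj.
by rewrite stack_u; case: (hB k2).
Qed.

Lemma entry_le_stack_x a b c i : `|a i 0| <= enorm (stack a b c).
Proof. by rewrite -(stack_x a b c) enorm_entry. Qed.
Lemma entry_le_stack_l a b c i : `|b i 0| <= enorm (stack a b c).
Proof. by rewrite -(stack_l a b c) enorm_entry. Qed.
Lemma entry_le_stack_u a b c i : `|c i 0| <= enorm (stack a b c).
Proof. by rewrite -(stack_u a b c) enorm_entry. Qed.

Lemma stackB a b c a' b' c' : stack a b c - stack a' b' c' = stack (a - a') (b - b') (c - c').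
Proof. by rewrite /stack opp_col_mx add_col_mx opp_col_mx add_col_mx. Qed.

Lemma Fmu_shift (g : 'cV[R]_n -> 'cV[R]_n) (l u : 'cV[R]_n) (mu mup : R) (x ll lu : 'cV[R]_n) :
  Fmu g l u mup x ll lu = Fmu g l u mu x ll lu + stack 0 (\col_i (mu - mup)) (\col_i (mu - mup)).
Proof.
rewrite /Fmu /stack !add_col_mx addr0; congr col_mx; [congr col_mx|];
  by apply/matrixP => i j; rewrite !mxE; ring.
Qed.

Lemma Fmu_entry_bound (g : 'cV[R]_n -> 'cV[R]_n) (l u : 'cV[R]_n) (mu mup : R) (x ll lu : 'cV[R]_n) k :
  `|Fmu g l u mup x ll lu k 0| <= enorm (Fmu g l u mu x ll lu) + `|mu - mup|.
Proof.
rewrite (Fmu_shift _ _ _ mu) mxE; apply: (le_trans (ler_normD _ _)); apply: lerD; first exact: enorm_entry.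
apply: stack_bound => i; rewrite !mxE normr0 normr_ge0; split => //.
Qed.

Lemma Fmu_l (g : 'cV[R]_n -> 'cV[R]_n) (l u : 'cV[R]_n) (mu : R) (x ll lu : 'cV[R]_n) i :
  `|ll i 0 * (x i 0 - l i 0) - mu| <= enorm (Fmu g l u mu x ll lu).
Proof. by have := entry_le_stack_l (g x - ll + lu) (\col_i (ll i 0 * (x i 0 - l i 0) - mu)) (\col_i (lu i 0 * (u i 0 - x i 0) - mu)) i; rewrite mxE. Qed.
Lemma Fmu_u (g : 'cV[R]_n -> 'cV[R]_n) (l u : 'cV[R]_n) (mu : R) (x ll lu : 'cV[R]_n) i :
  `|lu i 0 * (u i 0 - x i 0) - mu| <= enorm (Fmu g l u mu x ll lu).
Proof. by have := entry_le_stack_u (g x - ll + lu) (\col_i (ll i 0 * (x i 0 - l i 0) - mu)) (\col_i (lu i 0 * (u i 0 - x i 0) - mu)) i; rewrite mxE. Qed.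

End S.

Lemma enormN (R : realType) m (v : 'cV[R]_m) : enorm (- v) = enorm v.
Proof. by rewrite /enorm; congr Num.sqrt; apply: eq_bigr => i _; rewrite mxE sqrrN. Qed.

Lemma finite_pos (R : realType) n (Q : 'I_n -> R -> Prop) :
  (forall i, exists p, 0 < p /\ Q i p) ->
  (forall i p q, 0 < q <= p -> Q i p -> Q i q) ->
  exists p, 0 < p /\ forall i, Q i p.
Proof.
move=> hex hmon.
suff : forall s : seq 'I_n, exists p, 0 < p /\ forall i, i \in s -> Q i p.
  by case/(_ (enum 'I_n)) => p [p0 hp]; exists p; split => // i; apply: hp; rewrite mem_enum.
elim => [|i s [p [p0 hp]]]; first by exists 1; split.
have [q [q0 hq]] := hex i.
exists (Num.min p q); split; first by rewrite lt_min p0 q0.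
move=> j; rewrite in_cons => /orP [/eqP ->|js].
  by apply: (hmon i q) => //; rewrite lt_min p0 q0 ge_min lexx orbT.
by apply: (hmon j p); [rewrite lt_min p0 q0 ge_min lexx|apply: hp].
Qed.


Lemma aux1 (R : realFieldType) (a m e : R) : 0 <= a -> 0 <= m -> m <= e / (2 * (a + 1)) -> a * m <= e / 2.
Proof.
move=> a0 m0; rewrite ler_pdivlMr; last by lra.
move=> h; rewrite ler_pdivlMr; last by lra.
nra.
Qed.

Lemma aux_active (R : realFieldType) (Hd T S ll a q p M : R) :
  0 < a -> 0 < q -> 0 < p -> p / 2 <= ll -> ll * a <= q -> T = ll / a -> 0 <= S ->
  - M <= Hd -> M * q <= p ^+ 2 / 8 ->
  0 < Hd + T + S /\ (Hd + T + S)^-1 <= 8 * q / p ^+ 2.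
Proof.
move=> a0 q0 p0 hll hla -> S0 hH hM.
have ll0 : 0 < ll by lra.
have hT : p ^+ 2 / 4 <= ll / a * q.
  have ta : ll / a * a = ll by rewrite divfK ?gt_eqF.
  have t0 : 0 <= ll / a by rewrite divr_ge0 // ltW.
  have hq : 0 <= q - ll * a by lra.
  have := mulr_ge0 t0 hq.
  move: (ll / a) ta => t ta h.
  have : ll * ll <= t * q by nra.
  nra.
have hd : p ^+ 2 / 8 <= (Hd + ll / a + S) * q by nra.
have p2 : 0 < p ^+ 2 / 8 by rewrite divr_gt0 // exprn_gt0.
have d0 : 0 < Hd + ll / a + S.
  by rewrite -(@pmulr_lgt0 _ q) //; apply: lt_le_trans hd.
split => //.
rewrite -(@ler_pM2r _ (Hd + ll / a + S)) // mulVf ?gt_eqF //.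
rewrite -(@ler_pM2r _ (p ^+ 2)) ?exprn_gt0 // mul1r.
have -> : 8 * q / p ^+ 2 * (Hd + ll / a + S) * p ^+ 2 = 8 * ((Hd + ll / a + S) * q).
  by field; rewrite !gt_eqF.
have -> : p ^+ 2 = 8 * (p ^+ 2 / 8) by field.
by rewrite ler_pM2l.
Qed.

Lemma aux_inactive (R : realFieldType) (Hd ll lu a b q p M Q : R) :
  0 < p -> p / 2 <= a -> p / 2 <= b -> p / 2 <= Hd -> Hd <= M ->
  0 < ll -> 0 < lu -> ll * a <= q -> lu * b <= q -> q <= Q ->
  (M + 8 * Q / p ^+ 2)^-1 <= (Hd + ll / a + lu / b)^-1 <= 2 / p.
Proof.
move=> p0 ha hb hH hM ll0 lu0 hla hlb hq.
have a0 : 0 < a by lra.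
have b0 : 0 < b by lra.
have t0 : 0 <= ll / a by rewrite divr_ge0 // ltW.
have s0 : 0 <= lu / b by rewrite divr_ge0 // ltW.
have d0 : 0 < Hd + ll / a + lu / b by lra.
have ht : forall (ll a : R), 0 < ll -> p / 2 <= a -> ll * a <= q -> ll / a <= 4 * Q / p ^+ 2.
  move=> l1 a1 l10 ha1 hla1.
  have a10 : 0 < a1 by lra.
  have ta : l1 / a1 * a1 = l1 by rewrite divfK ?gt_eqF.
  have t1 : 0 <= l1 / a1 by rewrite divr_ge0 // ltW.
  rewrite ler_pdivlMr ?exprn_gt0 //.
  move: (l1 / a1) ta t1 => t ta t1.
  have h1 : t * (a1 * a1) <= Q by nra.
  have h2 : p ^+ 2 <= 4 * (a1 * a1) by nra.
  nra.
have h1 := ht ll a ll0 ha hla.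
have h2 := ht lu b lu0 hb hlb.
have Q0 : 0 <= Q by nra.
have D0 : 0 < M + 8 * Q / p ^+ 2.
  have : 0 <= 8 * Q / p ^+ 2 by rewrite divr_ge0 // ?exprn_ge0 //; lra.
  lra.
apply/andP; split.
  rewrite lef_pV2 ?posrE //; lra.
rewrite -[2 / p]invf_div lef_pV2 ?posrE ?divr_gt0 //; lra.
Qed.

Lemma enorm_ge0 (R : realType) m (v : 'cV[R]_m) : 0 <= enorm v.
Proof. exact: sqrtr_ge0. Qed.

Lemma enorm0 (R : realType) m : enorm (0 : 'cV[R]_m) = 0.
Proof.
rewrite /enorm big1 ?sqrtr0 // => i _; by rewrite mxE expr0n.
Qed.

Lemma newton_bound (R : realType) n (H : 'cV[R]_n -> 'M[R]_n) g (l u : 'cV[R]_n) mup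
  (x ll lu dx dll dlu : 'cV[R]_n) (K : R) :
  Fprime H l u x ll lu \in unitmx ->
  (forall w, enorm (invmx (Fprime H l u x ll lu) *m w) <= K * enorm w) ->
  newton_dir H g l u mup x ll lu dx dll dlu ->
  forall j, `|dx j 0| <= `|K| * enorm (Fmu g l u mup x ll lu).
Proof.
move=> hU hK hN j.
have E : stack dx dll dlu = invmx (Fprime H l u x ll lu) *m (- Fmu g l u mup x ll lu).
  by rewrite -hN mulKmx.
apply: (le_trans (@entry_le_stack_x _ _ dx dll dlu j)); rewrite E.
apply: (le_trans (hK _)); rewrite enormN ler_wpM2r ?enorm_ge0 //; exact: ler_norm.
Qed.

Theorem mainTheorem8 (R : realType) (n : nat)
  (f : 'cV[R]_n -> R) (g : 'cV[R]_n -> 'cV[R]_n) (H : 'cV[R]_n -> 'M[R]_n)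
  (l u : 'cV[R]_n)
  (xs lls lus : 'cV[R]_n)            (* (xstar, lambda^l star, lambda^u star) *)
  (delta hatmu C4 : R)
  (xmu llmu lumu : R -> 'cV[R]_n) :  (* barrier trajectory *)
  (* l < u *)
  (forall i, l i 0 < u i 0) ->
  (* f twice continuously differentiable, gradient g, Hessian H *)
  (forall x v, is_derive x v f (\sum_i g x i 0 * v i 0)) ->
  continuous g ->
  (forall x v, is_derive x v g (H x *m v)) ->
  continuous H ->
  (* locally Lipschitz Hessian *)
  (forall x, exists r : R, 0 < r /\ exists K : R, forall y z,
      enorm (y - x) < r -> enorm (z - x) < r -> `|H y - H z| <= K * enorm (y - z)) ->
  (* KKT conditions with strict complementarity *)
  g xs - lls + lus = 0 ->
  (forall i, [/\ l i 0 <= xs i 0, xs i 0 <= u i 0, 0 <= lls i 0 & 0 <= lus i 0]) ->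
  (forall i, (xs i 0 - l i 0) * lls i 0 = 0 /\ (u i 0 - xs i 0) * lus i 0 = 0) ->
  (forall i, 0 < (xs i 0 - l i 0) + lls i 0 /\ 0 < (u i 0 - xs i 0) + lus i 0) ->
  (* [Hess f(xstar)]_{I_x I_x} positive definite *)
  (forall v : 'cV[R]_n, v != 0 ->
     (forall i, (xs i 0 == l i 0) || (xs i 0 == u i 0) -> v i 0 = 0) ->
     0 < ((v^T *m H xs *m v) 0 0)) ->
  (* F' nonsingular and boundedly invertible on B((xstar,lambdastar), delta) *)
  0 < delta ->
  (exists K : R, forall x ll lu : 'cV[R]_n,
     enorm (stack x ll lu - stack xs lls lus) < delta ->
     Fprime H l u x ll lu \in unitmx /\
     forall w : 'cV[R]_(n + n + n),
       enorm (invmx (Fprime H l u x ll lu) *m w) <= K * enorm w) ->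
  (* Lipschitz barrier trajectory *)
  0 < hatmu ->
  (forall mu, 0 < mu <= hatmu ->
     [/\ enorm (stack (xmu mu) (llmu mu) (lumu mu) - stack xs lls lus) < delta,
         Fmu g l u mu (xmu mu) (llmu mu) (lumu mu) = 0 &
         enorm (stack (xmu mu) (llmu mu) (lumu mu) - stack xs lls lus) <= C4 * mu]) ->
  (exists L : R, forall mu1 mu2, 0 < mu1 <= hatmu -> 0 < mu2 <= hatmu ->
     enorm (stack (xmu mu1) (llmu mu1) (lumu mu1) - stack (xmu mu2) (llmu mu2) (lumu mu2))
       <= L * `|mu1 - mu2|) ->
  forall sigma : R, 0 < sigma < 1 ->
  (* part 1: the identity for Delta x^S - Delta x^N *)
  (forall (mu : R) (x ll lu dx dll dlu : 'cV[R]_n),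
     0 < mu ->
     enorm (stack x ll lu - stack xs lls lus) < delta ->
     strictly_interior l u x ll lu ->
     newton_dir H g l u (sigma * mu) x ll lu dx dll dlu ->
     forall i, dcoef H l u x ll lu i != 0 ->
       dxS H g l u (sigma * mu) x ll lu i - dx i 0
       = (dcoef H l u x ll lu i)^-1 * \sum_(j | j != i) H x i j * dx j 0)
  /\
  (* part 2: the estimates *)
  (forall C1 : R, 0 < C1 ->
   exists rho mubar c C : R,
     [/\ 0 < rho, 0 < mubar, mubar <= hatmu, 0 < c & c <= C] /\
     forall (mu : R) (x ll lu dx dll dlu : 'cV[R]_n),
       0 < mu <= mubar ->
       enorm (stack x ll lu - stack xs lls lus) < delta ->
       strictly_interior l u x ll lu ->
       enorm (stack x ll lu - stack (xmu mu) (llmu mu) (lumu mu)) < rho ->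
       enorm (Fmu g l u mu x ll lu) <= C1 * mu ->
       newton_dir H g l u (sigma * mu) x ll lu dx dll dlu ->
       forall i,
         ((xs i 0 == l i 0) || (xs i 0 == u i 0) ->
            0 < (dcoef H l u x ll lu i)^-1 <= C * mu /\
            `|dxS H g l u (sigma * mu) x ll lu i - dx i 0| <= C * mu ^+ 2) /\
         (~~ ((xs i 0 == l i 0) || (xs i 0 == u i 0)) ->
            c <= (dcoef H l u x ll lu i)^-1 <= C)).
Proof.
move=> hlu _ _ _ _ hLip hKKT hfeas hcomp hstrict hPD d0 [K hK] hmu0 htraj _ sigma /andP[s0 s1].
split.
  move=> mu x ll lu dx dll dlu _ _ hint hN i di.
  have [h1 h2 _ _] := hint i.
  have a0 : x i 0 - l i 0 != 0 by rewrite subr_eq0 gt_eqF.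
  have b0 : u i 0 - x i 0 != 0 by rewrite subr_eq0 gt_eqF.
  exact: (@part1 _ _ _ _ _ _ _ _ _ _ _ _ _ _ a0 b0 hN di).
move=> C1 C1p.
have [r0 [r0p [KL hKL]]] := hLip xs.
set KL' := `|KL|.
have KL'0 : 0 <= KL' by rewrite normr_ge0.
have hHl : forall y, enorm (y - xs) < r0 -> `|H y - H xs| <= KL' * enorm (y - xs).
  move=> y hy; apply: (le_trans (hKL y xs hy _)); last by rewrite ler_wpM2r ?enorm_ge0 ?ler_norm.
  by rewrite subrr enorm0.
pose Q (i : 'I_n) (p : R) :=
  [/\ xs i 0 == l i 0 -> p <= lls i 0, xs i 0 == u i 0 -> p <= lus i 0 &
      ~~ ((xs i 0 == l i 0) || (xs i 0 == u i 0)) ->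
        [/\ p <= xs i 0 - l i 0, p <= u i 0 - xs i 0 & p <= H xs i i]].
have [p [p0 hp]] : exists p, 0 < p /\ forall i, Q i p.
  apply: finite_pos; last first.
    move=> i p q /andP[q0 qp] [Q1 Q2 Q3]; split.
    - by move=> h; apply: le_trans qp (Q1 h).
    - by move=> h; apply: le_trans qp (Q2 h).
    - by move=> h; have [a b c] := Q3 h; split; apply: le_trans qp _.
  move=> i.
  have [hl|hl] := eqVneq (xs i 0) (l i 0).
    exists (lls i 0); split.
      by have [+ _] := hstrict i; rewrite hl subrr add0r.
    split.
    - by move=> _.
    - by move=> /eqP hu; have := hlu i; rewrite -hl hu ltxx.
    - by rewrite hl eqxx.
  have [hu|hu] := eqVneq (xs i 0) (u i 0).
    exists (lus i 0); split; last first.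
      split.
      - by rewrite hu => /eqP hl'; have := hlu i; rewrite hl' ltxx.
      - by move=> _.
      - by rewrite hu eqxx orbT.
    by have [_ +] := hstrict i; rewrite hu subrr add0r.
  have [fl fu _ _] := hfeas i.
  have hH : 0 < H xs i i.
    have := hPD (delta_mx i 0).
    have -> : (((delta_mx i 0 : 'cV[R]_n))^T *m H xs *m (delta_mx i 0 : 'cV[R]_n)) 0 0 = H xs i i.
      rewrite -mulmxA -colE mxE.
      under eq_bigr => k _ do rewrite !mxE.
      rewrite (bigD1 i) //= big1 ?addr0.
        by rewrite !eqxx mul1r.
      by move=> k /negbTE ki; rewrite ki /= mul0r.
    apply.
      apply/eqP => /matrixP /(_ i 0); rewrite !mxE !eqxx /=.
      by move/eqP; rewrite oner_eq0.
    move=> k hk; rewrite mxE; case: (eqVneq k i) => [ki|] //=.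
    by move: hk; rewrite ki (negbTE hl) (negbTE hu).
  exists (Num.min (xs i 0 - l i 0) (Num.min (u i 0 - xs i 0) (H xs i i))); split.
    rewrite !lt_min hH !subr_gt0 !lt_neqAle fl fu andbT /= eq_sym hl /=.
    by rewrite hu.
  split => //; rewrite ?(negbTE hl) ?(negbTE hu) // => _.
  by rewrite !ge_min !lexx !orbT.
have n0 : 0 <= n%:R :> R by rewrite ler0n.
set M := `|H xs| + KL' * r0 + 1.
have M1 : 1 <= M.
  have : 0 <= KL' * r0 by rewrite mulr_ge0 // ltW.
  have := normr_ge0 (H xs); rewrite /M; lra.
have hM : forall y, enorm (y - xs) < r0 -> forall a b, `|H y a b| <= M.
  move=> y hy a b; apply: (le_trans (@mx_entry_le _ _ _ (H y) a b)).
  have -> : H y = H xs + (H y - H xs) by rewrite addrC subrK.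
  apply: (le_trans (ler_normD _ _)).
  have := hHl y hy.
  have : KL' * enorm (y - xs) <= KL' * r0 by rewrite ler_wpM2l // ltW.
  rewrite /M; lra.
have hHii : forall y, enorm (y - xs) < r0 -> forall i,
    H xs i i - KL' * enorm (y - xs) <= H y i i.
  move=> y hy i.
  have := le_trans (@mx_entry_le _ _ _ (H y - H xs) i i) (hHl y hy).
  rewrite !mxE ler_norml => /andP[h1 _]; lra.
set K' := `|K|.
have K'0 : 0 <= K' by rewrite normr_ge0.
set e := Num.min (p / 2) (Num.min (p / (2 * (n%:R * KL' + 1))) (r0 / (2 * (n%:R + 1)))).
have nK0 : 0 <= n%:R * KL' by rewrite mulr_ge0.
have e0 : 0 < e.
  rewrite /e !lt_min !divr_gt0 //; lra.
have e1 : e <= p / 2 by rewrite /e !ge_min lexx.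
have e2 : e <= p / (2 * (n%:R * KL' + 1)) by rewrite /e !ge_min lexx ?orbT.
have e3 : e <= r0 / (2 * (n%:R + 1)) by rewrite /e !ge_min lexx ?orbT.
set rho := e / 2.
set mubar := Num.min hatmu (Num.min (e / (2 * (`|C4| + 1))) (p ^+ 2 / (8 * (1 + C1) * M))).
set Kdx := K' * ((n + n + n)%:R * (C1 + 1)).
have Kdx0 : 0 <= Kdx by apply: mulr_ge0 => //; apply: mulr_ge0; [rewrite ler0n|lra].
set CA := 8 * (1 + C1) / p ^+ 2.
have CA0 : 0 <= CA by apply: divr_ge0; [apply: mulr_ge0; lra | apply: exprn_ge0; lra].
set CI := 2 / p.
have CI0 : 0 <= CI by rewrite divr_ge0 ?ltW.
set Dmax := M + 8 * ((1 + C1) * hatmu) / p ^+ 2.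
have Dmax0 : 0 < Dmax.
  have : 0 <= 8 * ((1 + C1) * hatmu) / p ^+ 2.
    by apply: divr_ge0; [apply: mulr_ge0; [lra|apply: mulr_ge0; lra] | apply: exprn_ge0; lra].
  rewrite /Dmax; lra.
set c := Dmax^-1.
have c0 : 0 < c by rewrite invr_gt0.
have nMK : 0 <= CA * (n%:R * M * Kdx) by apply: mulr_ge0 => //; apply: mulr_ge0 => //; apply: mulr_ge0 => //; lra.
set C := CA + CI + c + CA * (n%:R * M * Kdx).
exists rho, mubar, c, C; split.
  split => //.
  - by rewrite divr_gt0.
  - rewrite /mubar !lt_min hmu0 !divr_gt0 ?exprn_gt0 //; try lra.
    by rewrite mulr_gt0 //; lra.
  - by rewrite /mubar ge_min lexx.
  - rewrite /C; lra.
move=> mu x ll lu dx dll dlu /andP[mu0 mub] hdel hint hrho hF hN i.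
move: (mub); rewrite /mubar !le_min => /andP[m1 /andP[m2 m3]].
have [_ _ hC4] := htraj mu (introT andP (conj mu0 m1)).
have hC4' : `|C4| * mu <= e / 2 by apply: aux1 => //; rewrite ltW.
have hC4'' : C4 * mu <= `|C4| * mu by rewrite ler_wpM2r ?ler_norm // ltW.
rewrite (@stackB _ _ x ll lu (xmu mu) (llmu mu) (lumu mu)) in hrho.
rewrite (@stackB _ _ (xmu mu) (llmu mu) (lumu mu) xs lls lus) in hC4.
have hclose : forall k, [/\ `|x k 0 - xs k 0| <= e, `|ll k 0 - lls k 0| <= e
    & `|lu k 0 - lus k 0| <= e].
  move=> k.
  have a1 := @entry_le_stack_x _ _ (x - xmu mu) (ll - llmu mu) (lu - lumu mu) k.
  have a2 := @entry_le_stack_x _ _ (xmu mu - xs) (llmu mu - lls) (lumu mu - lus) k.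
  have b1 := @entry_le_stack_l _ _ (x - xmu mu) (ll - llmu mu) (lu - lumu mu) k.
  have b2 := @entry_le_stack_l _ _ (xmu mu - xs) (llmu mu - lls) (lumu mu - lus) k.
  have c1 := @entry_le_stack_u _ _ (x - xmu mu) (ll - llmu mu) (lu - lumu mu) k.
  have c2 := @entry_le_stack_u _ _ (xmu mu - xs) (llmu mu - lls) (lumu mu - lus) k.
  rewrite !mxE in a1 a2 b1 b2 c1 c2.
  have t1 := ler_distD (xmu mu k 0) (x k 0) (xs k 0).
  have t2 := ler_distD (llmu mu k 0) (ll k 0) (lls k 0).
  have t3 := ler_distD (lumu mu k 0) (lu k 0) (lus k 0).
  rewrite /rho in hrho.
  split; lra.
have hxn : enorm (x - xs) <= n%:R * e.
  apply: enorm_le; first exact: ltW.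
  by move=> k; rewrite !mxE; have [h _ _] := hclose k; lra.
have hne : n%:R * e <= r0 / 2 by apply: aux1 => //; rewrite ltW.
have hxr : enorm (x - xs) < r0 by lra.
have hKe : KL' * enorm (x - xs) <= p / 2.
  apply: (@le_trans _ _ (KL' * (n%:R * e))); first by rewrite ler_wpM2l.
  rewrite mulrA [KL' * _]mulrC; apply: aux1 => //; exact: ltW.
have hHx := hM x hxr.
have hHxi := hHii x hxr.
have hpl : forall k, ll k 0 * (x k 0 - l k 0) <= (1 + C1) * mu.
  move=> k; have := le_trans (@Fmu_l _ _ g l u mu x ll lu k) hF.
  rewrite ler_norml => /andP[_ h]; lra.
have hpu : forall k, lu k 0 * (u k 0 - x k 0) <= (1 + C1) * mu.
  move=> k; have := le_trans (@Fmu_u _ _ g l u mu x ll lu k) hF.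
  rewrite ler_norml => /andP[_ h]; lra.
have hdx : forall j, `|dx j 0| <= Kdx * mu.
  move=> j.
  have [hU hKw] := hK x ll lu hdel.
  have h1 := @newton_bound _ _ H g l u (sigma * mu) x ll lu dx dll dlu K hU hKw hN j.
  have h2 : enorm (Fmu g l u (sigma * mu) x ll lu) <= (n + n + n)%:R * (C1 * mu + mu).
    apply: enorm_le; first by rewrite addr_ge0 ?mulr_ge0 ?ltW.
    move=> k; apply: (le_trans (@Fmu_entry_bound _ _ g l u mu (sigma * mu) x ll lu k)).
    apply: lerD => //.
    have hs : mu - sigma * mu = (1 - sigma) * mu by ring.
    have hs0 : 0 <= (1 - sigma) * mu by apply: mulr_ge0; lra.
    have hs1 : (1 - sigma) * mu <= mu by rewrite -[X in _ <= X]mul1r ler_wpM2r ?ltW //; lra.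
    by rewrite hs ger0_norm.
  apply: (le_trans h1).
  have -> : Kdx * mu = K' * ((n + n + n)%:R * (C1 * mu + mu)) by rewrite /Kdx; ring.
  by rewrite ler_wpM2l.
have hMq : M * ((1 + C1) * mu) <= p ^+ 2 / 8.
  move: m3; rewrite ler_pdivlMr; last by rewrite mulr_gt0 //; lra.
  move=> h; rewrite ler_pdivlMr; last by lra.
  have -> : M * ((1 + C1) * mu) * 8 = mu * (8 * (1 + C1) * M) by ring.
  exact: h.
have [xl xu ll0 lu0] := hint i.
have a0 : 0 < x i 0 - l i 0 by rewrite subr_gt0.
have b0 : 0 < u i 0 - x i 0 by rewrite subr_gt0.
have q0 : 0 < (1 + C1) * mu by rewrite mulr_gt0 //; lra.
have [cx cl cu] := hclose i.
move: (hHx i i); rewrite ler_norml => /andP[hHm hHM].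
split => [hact|hinact].
  have [hd0 hdC] : 0 < dcoef H l u x ll lu i /\
      (dcoef H l u x ll lu i)^-1 <= 8 * ((1 + C1) * mu) / p ^+ 2.
    have [hl|hu] : xs i 0 == l i 0 \/ xs i 0 == u i 0 by apply/orP.
      have [Q1 _ _] := hp i; have pl := Q1 hl.
      rewrite /dcoef.
      apply: (@aux_active _ (H x i i) (ll i 0 / (x i 0 - l i 0)) (lu i 0 / (u i 0 - x i 0))
        (ll i 0) (x i 0 - l i 0) ((1 + C1) * mu) p M) => //.
      - by move: cl; rewrite ler_norml => /andP[h _]; lra.
      - by rewrite divr_ge0 ?ltW.
    have [_ Q2 _] := hp i; have pu := Q2 hu.
    rewrite /dcoef addrAC.
    apply: (@aux_active _ (H x i i) (lu i 0 / (u i 0 - x i 0)) (ll i 0 / (x i 0 - l i 0))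
        (lu i 0) (u i 0 - x i 0) ((1 + C1) * mu) p M) => //.
    - by move: cu; rewrite ler_norml => /andP[h _]; lra.
    - by rewrite divr_ge0 ?ltW.
  have hdC' : (dcoef H l u x ll lu i)^-1 <= CA * mu.
    apply: (le_trans hdC); rewrite /CA le_eqVlt; apply/orP; left; apply/eqP.
    by field; rewrite gt_eqF.
  have CAC : CA <= C by rewrite /C; lra.
  split.
    rewrite invr_gt0 hd0 /=; apply: (le_trans hdC'); rewrite ler_wpM2r //; exact: ltW.
  have hdi : dcoef H l u x ll lu i != 0 by rewrite gt_eqF.
  have a0' : x i 0 - l i 0 != 0 by rewrite gt_eqF.
  have b0' : u i 0 - x i 0 != 0 by rewrite gt_eqF.
  have E : dxS H g l u (sigma * mu) x ll lu i - dx i 0 =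
      (dcoef H l u x ll lu i)^-1 * \sum_(j | j != i) H x i j * dx j 0.
    exact: (@part1 _ _ _ _ _ _ _ _ _ _ _ _ _ _ a0' b0' hN hdi).
  suff hb : `|(dcoef H l u x ll lu i)^-1 * \sum_(j | j != i) H x i j * dx j 0| <= C * mu ^+ 2.
    by rewrite -E in hb.
  rewrite normrM ger0_norm; last by rewrite invr_ge0 ltW.
  have hS : `|\sum_(j | j != i) H x i j * dx j 0| <= n%:R * (M * (Kdx * mu)).
    apply: (le_trans (ler_norm_sum _ _ _)).
    apply: (@le_trans _ _ (\sum_j `|H x i j * dx j 0|)).
      rewrite [X in _ <= X](bigD1 i) //= lerDr; exact: normr_ge0.
    apply: (@le_trans _ _ (\sum_(j < n) M * (Kdx * mu))).
      apply: ler_sum; move=> j _; rewrite normrM; apply: ler_pM; [exact: normr_ge0|exact: normr_ge0|exact: hHx|exact: hdx].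
    by rewrite sumr_const card_ord mulr_natl.
  apply: (@le_trans _ _ (CA * mu * (n%:R * (M * (Kdx * mu))))).
    by apply: ler_pM => //; rewrite invr_ge0 ltW.
  have -> : CA * mu * (n%:R * (M * (Kdx * mu))) = CA * (n%:R * M * Kdx) * mu ^+ 2 by ring.
  rewrite ler_wpM2r ?exprn_ge0 ?ltW //; rewrite /C; lra.
have [_ _ Q3] := hp i; have [pa pb pH] := Q3 hinact.
move: cx; rewrite ler_norml => /andP[cx1 cx2].
have hh := hHxi i.
have cx1' : - e <= x i 0 - xs i 0 := cx1.
have cx2' : x i 0 - xs i 0 <= e := cx2.
have ha : p / 2 <= x i 0 - l i 0 by lra.
have hb : p / 2 <= u i 0 - x i 0 by lra.
have hHd : p / 2 <= H x i i by lra.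
have hqQ : (1 + C1) * mu <= (1 + C1) * hatmu by rewrite ler_wpM2l //; lra.
have [hc hC] := andP (@aux_inactive _ (H x i i) (ll i 0) (lu i 0) (x i 0 - l i 0) (u i 0 - x i 0)
   ((1 + C1) * mu) p M ((1 + C1) * hatmu) p0 ha hb hHd hHM ll0 lu0 (hpl i) (hpu i) hqQ).
rewrite /dcoef; apply/andP; split.
  exact: hc.
have eCI : CI = 2 / p by [].
apply: (le_trans hC); rewrite /C; lra.
Qed.
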